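(* In the setting below, let $W=\ker Q=\{z\in Z: Q(z)=0\}$ and assume that $Z^*$ is the complemented (topological direct) sum of $Y$ and $Q^*(X^* )$. Then $Y$ is isomorphic to $W^*$.
   Context: Setting: $X$ is a separable Banach space, $(x_n)$ a sequence in $S_X$ with $\{\pm x_n\}$ dense in $S_X$; $U$ is a Banach space with a normalized $1$-unconditional boundedly complete basis $(u_n)$. For finite $I,J\subseteq\mathbb N$, $I<J$ means $\max I<\min J$. $Z$ is the completion of $c_{00}$ (unit vectors $(e_i)$) under $\|a\|_Z=\max\{\|\sum_{j=1}^k\|\sum_{i\in I_j}a_ix_i\|_Xu_{\min I_j}\|_U: k\in\mathbb N,\ I_1<\dots<I_k\text{ intervals}\}$. $(e_j^* )$ are the coordinate functionals of the basis $(e_j)$ of $Z$, $Y=\overline{\mathrm{span}}\{e_j^*\}\subseteq Z^*$. $Q:Z\to X$ is the quotient map $Q(\sum a_je_j)=\sum a_jx_j$, and $Q^*:X^*\to Z^*$ its adjoint. *)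

(* Defs.v *)
From HB Require Import structures.
From mathcomp Require Import all_boot all_order all_algebra.
From mathcomp Require Import all_classical all_reals all_analysis.
Set Implicit Arguments. Unset Strict Implicit. Unset Printing Implicit Defensive.
Import Order.TTheory GRing.Theory Num.Theory.
Import numFieldNormedType.Exports.
Local Open Scope classical_set_scope.
Local Open Scope ring_scope.

Section Defs.
Variable R : realType.

Definition psum (V : normedModType R) (a : nat -> R) (v : nat -> V) (n : nat) : V :=
  \sum_(i < n) a i *: v i.

Definition schauder_basis (V : normedModType R) (v : nat -> V) : Prop :=
  forall x : V, exists a : nat -> R,
    psum a v @ \oo --> x /\ (forall b : nat -> R, psum b v @ \oo --> x -> b = a).

Definition normalized (V : normedModType R) (v : nat -> V) : Prop :=
  forall n, `|v n| = 1.

Definition one_unconditional (V : normedModType R) (v : nat -> V) : Prop :=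
  forall (n : nat) (a eps : nat -> R), (forall i, eps i = 1 \/ eps i = -1) ->
    `|\sum_(i < n) (eps i * a i) *: v i| = `|\sum_(i < n) a i *: v i|.

Definition boundedly_complete (V : normedModType R) (v : nat -> V) : Prop :=
  forall a : nat -> R, (exists M : R, forall n, `|psum a v n| <= M) ->
    exists x : V, psum a v @ \oo --> x.

(* I_1 < ... < I_k nonempty intervals, I_j = [s j, t j) *)
Definition intervals (k : nat) (s t : nat -> nat) : Prop :=
  forall j, (j < k)%N -> (s j < t j)%N /\ ((j.+1 < k)%N -> (t j <= s j.+1)%N).

Definition zval (X U : normedModType R) (x : nat -> X) (u : nat -> U)
  (a : nat -> R) (k : nat) (s t : nat -> nat) : R :=
  `| \sum_(j < k) (`| \sum_(s j <= i < t j) a i *: x i |) *: u (s j) |.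

(* r is the Z-norm (the maximum in the definition) of the c00 vector a *)
Definition is_znorm (X U : normedModType R) (x : nat -> X) (u : nat -> U)
  (a : nat -> R) (r : R) : Prop :=
  (forall k s t, intervals k s t -> zval x u a k s t <= r) /\
  (exists k s t, intervals k s t /\ zval x u a k s t = r).

Definition trunc (n : nat) (a : nat -> R) : nat -> R :=
  fun i => if (i < n)%N then a i else 0.

Definition bdd_lin_fun (V : normedModType R) (D : set V) (f : V -> R) : Prop :=
  (forall (c : R) (v w : V), D v -> D w -> f (c *: v + w) = c * f v + f w) /\
  (exists M : R, forall v, D v -> `|f v| <= M * `|v|).

Definition opnorm (V : normedModType R) (D : set V) (f : V -> R) : R :=
  sup [set `|f v| | v in [set v | D v /\ `|v| <= 1]].

Definition in_closed_span (V : normedModType R) (g : nat -> V -> R) (f : V -> R) : Prop :=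
  bdd_lin_fun setT f /\
  forall eps : R, 0 < eps -> exists (n : nat) (b : nat -> R),
    opnorm setT (fun z => f z - \sum_(j < n) b j * g j z) < eps.

(* the normed space A (a subspace of V^* with the dual norm) is isomorphic
   to D^*, D a subspace of V; elements of D^* are represented by functionals
   on V, considered up to agreement on D *)
Definition isomorphic_to_dual (V : normedModType R) (A : set (V -> R)) (D : set V) : Prop :=
  exists T : (V -> R) -> (V -> R),
    (forall f, A f -> bdd_lin_fun D (T f)) /\
    (forall (c : R) f g, A f -> A g -> forall w, D w ->
        T (fun z => c * f z + g z) w = c * T f w + T g w) /\
    (forall g, bdd_lin_fun D g -> exists f, A f /\ forall w, D w -> T f w = g w) /\
    (exists c C : R, 0 < c /\ 0 < C /\ forall f, A f ->
        c * opnorm setT f <= opnorm D (T f) /\ opnorm D (T f) <= C * opnorm setT f).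

Definition complemented_sum (V : normedModType R) (A B : set (V -> R)) : Prop :=
  (forall f, bdd_lin_fun setT f -> exists y g, A y /\ B g /\ forall z, f z = y z + g z) /\
  (forall y g, A y -> B g -> (forall z, y z + g z = 0) -> forall z, y z = 0) /\
  (exists K : R, forall f y g, bdd_lin_fun setT f -> A y -> B g ->
      (forall z, f z = y z + g z) ->
      opnorm setT y <= K * opnorm setT f /\ opnorm setT g <= K * opnorm setT f).

End Defs.

(* Main.v *)
Require Import Defs.
From HB Require Import structures.
From mathcomp Require Import all_boot all_order all_algebra.
From mathcomp Require Import all_classical all_reals all_analysis.
Set Implicit Arguments. Unset Strict Implicit. Unset Printing Implicit Defensive.
Import Order.TTheory GRing.Theory Num.Theory.
Import numFieldNormedType.Exports.
From mathcomp Require Import lra zify.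
Local Open Scope classical_set_scope.
Local Open Scope ring_scope.

Section HBsec.
Variables (R : realType) (V : normedModType R).
Variables (D : set V) (g : V -> R) (M : R).
Hypotheses (M0 : 0 <= M) (D0 : D 0)
  (Dlin : forall (c : R) v w, D v -> D w -> D (c *: v + w))
  (glin : forall (c : R) v w, D v -> D w -> g (c *: v + w) = c * g v + g w)
  (gb : forall v, D v -> `|g v| <= M * `|v|).

Let G0 : set (V * R) := [set p | D p.1 /\ p.2 = g p.1].

Let goodG (G : set (V * R)) : Prop :=
  [/\ G0 `<=` G,
      (forall z a b, G (z, a) -> G (z, b) -> a = b),
      (forall (c : R) z a w b, G (z, a) -> G (w, b) -> G (c *: z + w, c * a + b)) &
      (forall z a, G (z, a) -> a <= M * `|z|)].

Let g0 : g 0 = 0.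
Proof.
have := glin 1 D0 D0; rewrite scale1r addr0 mul1r => h.
by apply: (addrI (g 0)); rewrite -h addr0.
Qed.

Let goodG0 : goodG G0.
Proof.
split => //.
- by move=> z a b [_ /= ->] [_ /= ->].
- move=> c z a w b [/= Dz ->] [/= Dw ->]; split => /=; first exact: Dlin.
  by rewrite glin.
- by move=> z a [/= Dz ->]; apply: le_trans (gb Dz); exact: ler_norm.
Qed.

Let zero_in A : goodG A -> A (0, 0).
Proof. by case=> sub _ _ _; apply: sub; split => //=; rewrite g0. Qed.

Let chain_common (F : set (set (V * R))) :
  F `<=` (fun G => goodG (G `|` G0)) -> total_on F subset ->
  forall p q, (\bigcup_(X in F) X `|` G0) p -> (\bigcup_(X in F) X `|` G0) q ->
  exists H, [/\ goodG H, H p, H q & H `<=` \bigcup_(X in F) X `|` G0].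
Proof.
move=> FP tot p q Sp Sq.
have sub X : F X -> X `|` G0 `<=` \bigcup_(X in F) X `|` G0.
  move=> FX r [Xr|G0r]; [left; exists X => // | by right].
case: Sp => [[X1 FX1 X1p]|G0p]; case: Sq => [[X2 FX2 X2q]|G0q].
- case: (tot _ _ FX1 FX2) => s.
  + exists (X2 `|` G0); split; [exact: FP|left; exact: s|by left|exact: sub].
  + exists (X1 `|` G0); split; [exact: FP|by left|left; exact: s|exact: sub].
- exists (X1 `|` G0); split; [exact: FP|by left|by right|exact: sub].
- exists (X2 `|` G0); split; [exact: FP|by right|by left|exact: sub].
- exists G0; split => //; by move=> r G0r; right.
Qed.

Let chain_good (F : set (set (V * R))) :
  F `<=` (fun G => goodG (G `|` G0)) -> total_on F subset ->
  goodG (\bigcup_(X in F) X `|` G0).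
Proof.
move=> FP tot; have C := chain_common FP tot.
split.
- by move=> r G0r; right.
- move=> z a b Sa Sb; have [H [[_ fH _ _] Ha Hb _]] := C _ _ Sa Sb; exact: fH Ha Hb.
- move=> c z a w b Sa Sb; have [H [[_ _ lH _] Ha Hb sH]] := C _ _ Sa Sb.
  exact/sH/lH.
- move=> z a Sa; have [H [[_ _ _ dH] Ha _ _]] := C _ _ Sa Sa; exact: dH Ha.
Qed.

Let extend (A : set (V * R)) z0 : goodG A -> ~ (exists a, A (z0, a)) ->
  exists B, [/\ goodG B, A `<=` B & ~ (B `<=` A)].
Proof.
move=> gA nz0; have A00 := zero_in gA.
case: gA => G0A fA lA dA.
have key s a s' a' : A (s, a) -> A (s', a') ->
    a - M * `|s - z0| <= M * `|s' + z0| - a'.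
  move=> Aa Aa'; have := dA _ _ (lA 1 _ _ _ _ Aa Aa').
  rewrite scale1r mul1r => h.
  have h2 : M * `|s + s'| <= M * `|s - z0| + M * `|s' + z0|.
    rewrite -mulrDr ler_wpM2l //.
    have -> : s + s' = (s - z0) + (s' + z0) by rewrite addrACA addNr addr0.
    exact: ler_normD.
  lra.
pose E := [set r | exists s a, A (s, a) /\ r = a - M * `|s - z0|].
have E0 : E !=set0 by exists (0 - M * `|0 - z0|); exists 0, 0.
have Eub s' a' : A (s', a') -> ubound E (M * `|s' + z0| - a').
  by move=> As' r [s [a [As ->]]]; exact: key.
have hsE : has_ubound E by exists (M * `|0 + z0| - 0); exact: Eub.
pose c := sup E.
have cge s a : A (s, a) -> a - M * `|s - z0| <= c.
  by move=> As; apply: ub_le_sup => //; exists s, a.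
have cle s' a' : A (s', a') -> c <= M * `|s' + z0| - a'.
  by move=> As'; apply: ge_sup => //; exact: Eub.
pose B : set (V * R) := [set p | exists s a t, A (s, a) /\ p = (s + t *: z0, a + t * c)].
have AB : A `<=` B.
  by move=> [s a] As; exists s, a, 0; split => //; rewrite scale0r addr0 mul0r addr0.
exists B; split => //; last first.
  move=> BA; apply: nz0; exists c; apply: BA; exists 0, 0, 1; split => //.
  by rewrite add0r scale1r add0r mul1r.
split.
- by move=> r /G0A/AB.
- move=> z a' b' [s [a [t [As [-> ->]]]]] [s2 [a2 [t2 [As2 [e ->]]]]].
  have [tt|tt] := eqVneq t t2.
    subst t2; move: e => /addIr es; subst s2; by rewrite (fA _ _ _ As As2).
  exfalso; apply: nz0.
  have ez : z0 = (t - t2)^-1 *: s2 + ((- (t - t2)^-1) *: s + 0).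
    rewrite addr0 scaleNr -scalerBr; apply: (@scalerI _ _ (t - t2)).
      by rewrite subr_eq0.
    rewrite scalerA divff ?subr_eq0 // scale1r scalerBl.
    apply/eqP; rewrite subr_eq eq_sym addrAC subr_eq -e.
    by rewrite [s + _]addrC.
  exists ((t - t2)^-1 * a2 + ((- (t - t2)^-1) * a + 0)); rewrite ez.
  by apply: (lA) => //; apply: (lA).
- move=> k z a' w b' [s [a [t [As [-> ->]]]]] [s2 [a2 [t2 [As2 [-> ->]]]]].
  exists (k *: s + s2), (k * a + a2), (k * t + t2); split; first exact: lA.
  congr pair.
    by rewrite scalerDr scalerA scalerDl addrACA.
  by rewrite mulrDr mulrA mulrDl addrACA.
- move=> z a' [s [a [t [As [-> ->]]]]].
  have [t0|t0|->] := ltgtP t 0; last first.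
  + by rewrite scale0r addr0 mul0r addr0; exact: dA.
  + have := cle _ _ (lA t^-1 _ _ _ _ As A00).
    rewrite !addr0 => h.
    have := ler_wpM2l (ltW t0) h.
    rewrite mulrBr mulVKf ?gt_eqF //.
    have -> : t * (M * `|t^-1 *: s + z0|) = M * `|s + t *: z0|.
      rewrite mulrCA; congr (M * _).
      have -> : s + t *: z0 = t *: (t^-1 *: s + z0).
        by rewrite scalerDr scalerA divff ?gt_eqF // scale1r.
      by rewrite normrZ gtr0_norm.
    move=> h2; lra.
  + have tp : 0 < - t by rewrite oppr_gt0.
    have := cge _ _ (lA (- t)^-1 _ _ _ _ As A00).
    rewrite !addr0 => h.
    have := ler_wpM2l (ltW tp) h.
    rewrite mulrBr mulVKf ?gt_eqF //.
    have -> : - t * (M * `|(- t)^-1 *: s - z0|) = M * `|s + t *: z0|.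
      rewrite mulrCA; congr (M * _).
      have -> : s + t *: z0 = (- t) *: ((- t)^-1 *: s - z0).
        by rewrite scalerBr scalerA divff ?gt_eqF // scale1r scaleNr opprK.
      by rewrite normrZ gtr0_norm.
    move=> h2; lra.
Qed.

Lemma hahn_banach_aux : exists h : V -> R,
  [/\ (forall (c : R) v w, h (c *: v + w) = c * h v + h w),
      (forall v, `|h v| <= M * `|v|) &
      (forall v, D v -> h v = g v)].
Proof.
have [A [PA Amax]] := @Zorn_bigcup _ (fun G => goodG (G `|` G0)) chain_good.
set A' := A `|` G0 in PA.
have A'max B : goodG B -> A' `<=` B -> B `<=` A'.
  move=> gB AB; apply: contrapT => nBA; apply: (Amax B).
    split; first by move=> r Ar; apply: AB; left.
    by move=> BA; apply: nBA => r /BA Ar; left.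
  by rewrite setUidl //; case: gB.
have tot z : exists a, A' (z, a).
  apply: contrapT => nz; have [B [gB AB nBA]] := extend PA nz.
  by apply: nBA; exact: A'max.
have [h hP] := choice tot.
have A00 := zero_in PA.
case: PA => G0A fA lA dA.
have hlin c v w : h (c *: v + w) = c * h v + h w.
  by apply: fA (hP _) _; apply: lA; apply: hP.
exists h; split => //.
- move=> v; rewrite ler_norml; apply/andP; split; last exact: dA (hP v).
  have := dA _ _ (lA (-1) _ _ _ _ (hP v) A00).
  by rewrite !addr0 scaleN1r normrN mulN1r lerNl.
- move=> v Dv; apply: fA (hP v) _; apply: G0A; by split.
Qed.
End HBsec.
Section Ebound.
Variables (R : realType) (X U Z : normedModType R).
Variables (x : nat -> X) (u : nat -> U) (e : nat -> Z).
Hypotheses (Hx1 : forall n, `|x n| = 1) (Hun : normalized u)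
  (HZnorm : forall (n : nat) (a : nat -> R),
             is_znorm x u (trunc n a) `|\sum_(i < n) a i *: e i|).

Let ind (n : nat) : nat -> R := fun i => if i == n then 1 else 0.

Let sum_ind n m : forall p,
  \sum_(m <= i < p) ind n i *: x i = if ((m <= n) && (n < p))%N then x n else 0.
Proof.
elim=> [|p IH]; first by rewrite big_geq // andbF.
have [mp|pm] := leqP m p; last first.
  rewrite big_geq //; case: ifP => // /andP[mn np]; exfalso.
  have : (m <= p)%N by apply: leq_trans mn _; rewrite -ltnS.
  by rewrite leqNgt pm.
rewrite big_nat_recr //= IH /ind.
have [epn|pn] := eqVneq p n.
  by subst p; rewrite ltnn andbF ltnSn mp andbT scale1r add0r.
rewrite scale0r addr0; congr (if _ then _ else _).
by rewrite [(n < p.+1)%N]ltnS [(n <= p)%N]leq_eqVlt eq_sym (negbTE pn).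
Qed.

Let intervals_sep k s t : intervals k s t ->
  forall j d, (j + d.+1 < k)%N -> (t j <= s (j + d.+1))%N.
Proof.
move=> I j; elim=> [|d IH] h.
  rewrite addn1 in h *; by case: (I j (ltnW h)) => _ /(_ h).
have h' : (j + d.+1 < k)%N by lia.
apply: leq_trans (IH h') _.
case: (I (j + d.+1) h') => /ltnW st; rewrite -addnS => /(_ h).
by apply: leq_trans st.
Qed.

Lemma norm_e_le1 n : `|e n| <= 1.
Proof.
have E : \sum_(i < n.+1) ind n i *: e i = e n.
  rewrite big_ord_recr /= /ind eqxx scale1r big1 ?add0r //.
  by move=> i _; rewrite (ltn_eqF (ltn_ord i)) scale0r.
rewrite -E; have [_ [k [s [t [I <-]]]]] := HZnorm n.+1 (ind n).
rewrite /zval.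
have tr : trunc n.+1 (ind n) = ind n.
  apply: funext => i; rewrite /trunc /ind; case: ifP => // /negbT.
  by rewrite -leqNgt => h; case: eqP => // ei; move: h; rewrite ei ltnn.
rewrite tr.
rewrite (eq_bigr (fun j : 'I_k => (`|if ((s j <= n) && (n < t j))%N then x n else 0|) *: u (s j))); last by move=> j _; rewrite sum_ind.
case: (pickP (fun j : 'I_k => ((s j <= n) && (n < t j))%N)) => [j0 P0|none].
  rewrite (bigD1 j0) //= P0 big1 ?addr0; first by rewrite normrZ Hx1 normr1 mul1r Hun.
  move=> j nj; case: ifP; last by rewrite normr0 scale0r.
  case/andP: P0 => s0 t0 /andP[s1 t1]; exfalso.
  have [lt|lt|eq] := ltngtP j0 j.
  - have := @intervals_sep _ _ _ I j0 (j - j0).-1.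
    have -> : (j0 + (j - j0).-1.+1 = j)%N by lia.
    move=> /(_ (ltn_ord j)) h; lia.
  - have := @intervals_sep _ _ _ I j (j0 - j).-1.
    have -> : (j + (j0 - j).-1.+1 = j0)%N by lia.
    move=> /(_ (ltn_ord j0)) h; lia.
  - by move: nj; rewrite (val_inj eq) eqxx.
rewrite big1 ?normr0 // => j _; by rewrite none normr0 scale0r.
Qed.
End Ebound.
Section Preimage.
Variables (R : realType) (X : normedModType R) (Z : completeNormedModType R).
Variables (x : nat -> X) (e : nat -> Z) (Q : Z -> X).
Hypotheses (He : forall n, `|e n| <= 1)
  (Hxdense : forall y : X, `|y| = 1 -> forall eps : R, 0 < eps ->
             exists n, `|y - x n| < eps \/ `|y + x n| < eps)
  (HQlin : forall (c : R) (z w : Z), Q (c *: z + w) = c *: Q z + Q w)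
  (HQbdd : exists M : R, forall z, `|Q z| <= M * `|z|)
  (HQe : forall j, Q (e j) = x j).

Lemma Q0 : Q 0 = 0.
Proof.
have := HQlin 1 0 0; rewrite !scale1r addr0 => h.
by apply: (addrI (Q 0)); rewrite -h addr0.
Qed.

Lemma QZ c z : Q (c *: z) = c *: Q z.
Proof. by have := HQlin c z 0; rewrite !addr0 Q0 addr0. Qed.

Lemma QD z w : Q (z + w) = Q z + Q w.
Proof. by have := HQlin 1 z w; rewrite !scale1r. Qed.

Lemma QB z w : Q (z - w) = Q z - Q w.
Proof. by rewrite QD -scaleN1r QZ scaleN1r. Qed.

Let step (y : X) : exists w, `|w| <= `|y| /\ `|y - Q w| <= `|y| / 2.
Proof.
have [->|y0] := eqVneq y 0.
  by exists 0; rewrite Q0 subr0 !normr0 mul0r.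
have ny : 0 < `|y| by rewrite normr_gt0.
have n1 : `| `|y|^-1 *: y| = 1.
  by rewrite normrZ normfV normr_id mulVf // gt_eqF.
have h2 : (0:R) < 2^-1 by rewrite invr_gt0 ltr0n.
have [n [h|h]] := Hxdense n1 h2; last first.
- exists ((- `|y|) *: e n); rewrite QZ HQe normrZ normrN normr_id; split.
    by rewrite ler_piMr // ltW.
  have -> : y - (- `|y|) *: x n = `|y| *: (`|y|^-1 *: y + x n).
    by rewrite scalerDr scalerA divff ?gt_eqF // scale1r scaleNr opprK.
  rewrite normrZ normr_id; move: h; set d := `|_|; move=> h; nra.
- exists (`|y| *: e n); rewrite QZ HQe normrZ normr_id; split.
    by rewrite ler_piMr // ltW.
  have -> : y - `|y| *: x n = `|y| *: (`|y|^-1 *: y - x n).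
    by rewrite scalerBr scalerA divff ?gt_eqF // scale1r.
  rewrite normrZ normr_id; move: h; set d := `|_|; move=> h; nra.
Qed.

Lemma preimage_bound y : exists z, Q z = y /\ `|z| <= 2 * `|y|.
Proof.
have [w hw] := choice step.
pose r k := iter k (fun v => v - Q (w v)) y.
have rS k : r k.+1 = r k - Q (w (r k)) by rewrite /r iterS.
have rb k : `|r k| <= `|y| * (2^-1)^+k.
  elim: k => [|k IH]; first by rewrite expr0 mulr1.
  rewrite rS; apply: le_trans (hw (r k)).2 _; rewrite exprS.
  move: IH; set p := (2^-1)^+k; have : 0 <= p by rewrite exprn_ge0 // invr_ge0 ler0n.
  move=> p0 IH; nra.
pose v k := w (r k).
have vb k : `|v k| <= geometric `|y| 2^-1 k.
  by apply: le_trans (hw (r k)).1 (rb k).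
have QS N : Q (series v N) = y - r N.
  elim: N => [|N IH]; first by rewrite /series /= big_geq // Q0 /r /= subrr.
  by rewrite seriesSr QD IH rS /v opprB addrA addrAC.
have h2 : `|2^-1 : R| < 1.
  by rewrite ger0_norm ?invr_ge0 ?ler0n // invf_lt1 ?ltr0n // ltr1n.
have cg : cvgn (series (geometric `|y| 2^-1)) := @is_cvg_geometric_series _ `|y| 2^-1 h2.
have cn : cvgn [normed series v].
  apply: (series_le_cvg _ _ vb cg) => n; first exact: normr_ge0.
  by rewrite /geometric mulr_ge0 // exprn_ge0 // invr_ge0 ler0n.
have cz := normed_cvg cn.
exists (limn (series v)); split; last first.
  apply: le_trans (lim_series_norm cn) _.
  apply: le_trans (lim_series_le cn cg vb) _.
  rewrite (cvg_lim _ (@cvg_geometric_series _ `|y| 2^-1 h2)) //.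
  have -> : (1 - 2^-1 : R) = 2^-1 by lra.
  by rewrite invrK mulrC.
have [MQ HM] := HQbdd.
set z := limn (series v).
have H : forall eps, 0 < eps -> `|Q z - y| < eps.
  move=> eps ep.
  have K0 : 0 < `|MQ| + 1 by rewrite ltr_wpDl.
  have e1 : 0 < eps / 2 / (`|MQ| + 1) by rewrite divr_gt0 // divr_gt0.
  have e2 : 0 < eps / 2 by rewrite divr_gt0.
  have H1 := proj1 (cvgrPdist_lt _ _) cz _ e1.
  have H2 := proj1 (cvgrPdist_lt _ _) (@cvg_geometric _ `|y| 2^-1 h2) _ e2.
  have [n [/= h1 h3]] := filter_ex (filterI (H1 _) (H2 _)).
  have -> : Q z - y = Q (z - series v n) - r n.
    by rewrite QB QS opprB addrA addrAC addrK.
  apply: le_lt_trans (ler_normB _ _) _.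
  have hq : `|Q (z - series v n)| <= (`|MQ| + 1) * `|z - series v n|.
    apply: le_trans (HM _) _; apply: ler_wpM2r; first exact: normr_ge0.
    by apply: le_trans (ler_norm _) _; rewrite lerDl.
  have hr : `|r n| <= `|0 - geometric `|y| 2^-1 n|.
    by rewrite sub0r normrN /geometric ger0_norm ?mulr_ge0 ?exprn_ge0 ?invr_ge0 ?ler0n.
  have h1' : (`|MQ| + 1) * `|z - series v n| < eps / 2.
    by rewrite mulrC -ltr_pdivlMr.
  lra.
apply/eqP; rewrite -subr_eq0; apply/eqP.
have [//|nz] := eqVneq (Q z - y) 0.
by have := H `|Q z - y|; rewrite normr_gt0 nz ltxx => /(_ isT).
Qed.

End Preimage.

Section Opnorm.
Variables (R : realType) (V : normedModType R).

Lemma opnorm_ub (D : set V) (f : V -> R) (M0 : R) v :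
  (forall w, D w -> `|f w| <= M0 * `|w|) -> D v -> `|v| <= 1 -> `|f v| <= opnorm D f.
Proof.
move=> Hb Dv v1; apply: ub_le_sup; last by exists v.
exists `|M0| => _ [w [Dw w1] <-].
apply: le_trans (Hb _ Dw) _; apply: le_trans (ler_norm _) _.
by rewrite normrM normr_id -[leRHS]mulr1 ler_wpM2l.
Qed.

Lemma opnorm_le (D : set V) (f : V -> R) N :
  D 0 -> (forall v, D v -> `|v| <= 1 -> `|f v| <= N) -> opnorm D f <= N.
Proof.
move=> D0 Hb; apply: ge_sup.
  by exists `|f 0|, 0 => //; split => //; rewrite normr0.
by move=> _ [w [Dw w1] <-]; exact: Hb.
Qed.

Lemma lin0 (D : set V) (f : V -> R) :
  D 0 -> (forall (c : R) v w, D v -> D w -> f (c *: v + w) = c * f v + f w) -> f 0 = 0.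
Proof.
move=> D0 fl; have := fl 1 _ _ D0 D0; rewrite scale1r addr0 mul1r => h.
by apply: (addrI (f 0)); rewrite -h addr0.
Qed.

Lemma opnorm_homog (D : set V) (f : V -> R) v :
  D 0 -> (forall (c : R) v w, D v -> D w -> D (c *: v + w)) ->
  bdd_lin_fun D f -> D v -> `|f v| <= opnorm D f * `|v|.
Proof.
move=> D0 Dl [fl [M0 Hb]] Dv.
have f0 := lin0 D0 fl.
have [->|v0] := eqVneq v 0; first by rewrite f0 !normr0 mulr0.
have nv : 0 < `|v| by rewrite normr_gt0.
have Dv' : D (`|v|^-1 *: v) by rewrite -[_ *: v]addr0; apply: Dl.
have n1 : `| `|v|^-1 *: v| <= 1.
  by rewrite normrZ normfV normr_id mulVf // gt_eqF.
have := opnorm_ub Hb Dv' n1.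
have -> : f (`|v|^-1 *: v) = `|v|^-1 * f v.
  by rewrite -[_ *: v]addr0 fl // f0 addr0.
rewrite normrM normfV normr_id => h.
by rewrite -ler_pdivrMr // mulrC.
Qed.

Lemma opnorm_ge0 (D : set V) (f : V -> R) :
  D 0 -> bdd_lin_fun D f -> 0 <= opnorm D f.
Proof.
move=> D0 [fl [M0 Hb]]; apply: le_trans (opnorm_ub Hb D0 _); first exact: normr_ge0.
by rewrite normr0.
Qed.
End Opnorm.

Unset Implicit Arguments.

Theorem propositionA9 (R : realType)
  (X U Z : completeNormedModType R)
  (x : nat -> X) (u : nat -> U) (e : nat -> Z)
  (estar : nat -> Z -> R) (Q : Z -> X)
  (* X separable, (x_n) in S_X with {+-x_n} dense in S_X *)
  (HXsep : exists d : nat -> X, forall (y : X) (eps : R), 0 < eps ->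
             exists n, `|y - d n| < eps)
  (Hx1 : forall n, `|x n| = 1)
  (Hxdense : forall y : X, `|y| = 1 -> forall eps : R, 0 < eps ->
             exists n, `|y - x n| < eps \/ `|y + x n| < eps)
  (* (u_n) normalized 1-unconditional boundedly complete basis of U *)
  (Hub : schauder_basis u) (Hun : normalized u)
  (Huu : one_unconditional u) (Hubc : boundedly_complete u)
  (* Z is the completion of c00 under ||.||_Z, e_i the unit vectors *)
  (HZnorm : forall (n : nat) (a : nat -> R),
             is_znorm x u (trunc n a) `|\sum_(i < n) a i *: e i|)
  (HZdense : forall (z : Z) (eps : R), 0 < eps ->
             exists (n : nat) (a : nat -> R), `|z - \sum_(i < n) a i *: e i| < eps)
  (* coordinate functionals *)
  (Hestar : forall j, bdd_lin_fun setT (estar j) /\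
             forall i, estar j (e i) = (if i == j then 1 else 0))
  (* the quotient map Q *)
  (HQlin : forall (c : R) (z w : Z), Q (c *: z + w) = c *: Q z + Q w)
  (HQbdd : exists M : R, forall z, `|Q z| <= M * `|z|)
  (HQe : forall j, Q (e j) = x j)
  (* Z^* = Y (+) Q^*(X^* ) complemented *)
  (Hcompl : complemented_sum
              (in_closed_span estar)
              [set g | exists phi : X -> R, bdd_lin_fun setT phi /\ g = phi \o Q]) :
  isomorphic_to_dual (in_closed_span estar) [set z | Q z = 0].
Proof.
set D := [set z | Q z = 0].
have He := norm_e_le1 Hx1 Hun HZnorm.
have pre := preimage_bound He Hxdense HQlin HQbdd HQe.
have D0 : D 0 by rewrite /D /= (Q0 HQlin).
have Dl (c : R) v w : D v -> D w -> D (c *: v + w).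
  by rewrite /D /= HQlin => -> ->; rewrite scaler0 addr0.
have annih (k : Z -> R) : bdd_lin_fun setT k -> (forall w, D w -> k w = 0) ->
    exists phi, bdd_lin_fun setT phi /\ k = phi \o Q.
  move=> [kl [Mk Hk]] kD.
  have [p Hp] := choice pre.
  have kQ z1 z2 : Q z1 = Q z2 -> k z1 = k z2.
    move=> e12; have : D (z1 - z2) by rewrite /D /= (QB HQlin) e12 subrr.
    move=> /kD h; have := kl 1 (z1 - z2) z2 I I.
    by rewrite scale1r mul1r h add0r subrK.
  exists (fun y => k (p y)); split; last first.
    by apply: funext => z /=; apply: kQ; rewrite (Hp (Q z)).1.
  split.
    move=> c v w _ _; rewrite -kl //; apply: kQ.
    by rewrite HQlin (Hp _).1 (Hp v).1 (Hp w).1.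
  exists (`|Mk| * 2) => v _.
  apply: le_trans (Hk _ I) _; apply: le_trans (ler_wpM2r (normr_ge0 _) (ler_norm Mk)) _.
  by rewrite -mulrA ler_wpM2l // (Hp v).2.
have [Hdec [Huniq [K HK]]] := Hcompl.
exists (fun f => f); split; [|split; [|split]].
- move=> f [[fl [M0 Hb]] _]; split; first by move=> c v w _ _; apply: fl.
  by exists M0 => v _; apply: Hb.
- by move=> c f g _ _ w _.
- move=> g [gl [Mg Hg]].
  have gb v : D v -> `|g v| <= `|Mg| * `|v|.
    move=> Dv; apply: le_trans (Hg _ Dv) _; have := ler_norm Mg; have := normr_ge0 v; nra.
  have [h [hl hb hD]] := hahn_banach_aux (normr_ge0 Mg) D0 Dl gl gb.
  have hB : bdd_lin_fun setT h.
    by split; [move=> c v w _ _; apply: hl | exists `|Mg| => v _; apply: hb].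
  have [y [g' [Yy [[phi [[phl _] ->]] hyg]]]] := Hdec h hB.
  exists y; split => // w Dw.
  have ph0 : phi 0 = 0 := lin0 I phl.
  by move: (hyg w); rewrite /= Dw ph0 addr0 hD.
- exists (`|K| + 1)^-1, 1; split; first by rewrite invr_gt0 ltr_wpDl.
  split; first exact: ltr01.
  move=> f Yf; have [[fl [Mf Hf]] _] := Yf.
  have fD : bdd_lin_fun D f by split; [move=> c v w _ _; apply: fl|exists Mf => v _; apply: Hf].
  set N := opnorm D f.
  have N0 : 0 <= N := opnorm_ge0 D0 fD.
  split; last first.
    rewrite mul1r; apply: opnorm_le => // v Dv v1.
    exact: (opnorm_ub Hf I v1).
  have gb v : D v -> `|f v| <= N * `|v| by move=> Dv; exact: opnorm_homog.
  have [h [hl hb hD]] := hahn_banach_aux N0 D0 Dl (fun c v w _ _ => fl c v w I I) gb.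
  have hB : bdd_lin_fun setT h.
    by split; [move=> c v w _ _; apply: hl | exists N => v _; apply: hb].
  have ohN : opnorm setT h <= N.
    apply: opnorm_le => // v _ v1; apply: le_trans (hb v) _.
    by rewrite -[leRHS]mulr1 ler_wpM2l.
  have oh0 := opnorm_ge0 I hB.
  have kB : bdd_lin_fun setT (fun z => f z - h z).
    split.
      move=> c v w _ _; rewrite fl // hl //; lra.
    exists (Mf + N) => v _; apply: le_trans (ler_normB _ _) _.
    rewrite mulrDl; apply: lerD; [exact: Hf | exact: hb].
  have [phi [[phl [Mp Hp]] kphi]] := annih _ kB (fun w Dw => ltac:(by rewrite /= (hD w Dw) subrr)).
  have := HK h f (fun z => - phi (Q z)) hB Yf.
  case.
  + exists (fun y => - phi y); split.
      split; first by move=> c v w _ _; rewrite phl //; lra.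
      by exists Mp => v _; rewrite normrN; apply: Hp.
    by [].
  + move=> z; have := congr1 (fun F => F z) kphi => /= kz; lra.
  move=> hf _.
  have : opnorm setT f <= (`|K| + 1) * N.
    apply: le_trans hf _; apply: le_trans (ler_wpM2r oh0 (ler_norm K)) _.
    have : 0 <= `|K| := normr_ge0 K; nra.
  move=> H; rewrite mulrC ler_pdivrMr ?ltr_wpDl //.
  by rewrite mulrC.
Qed.
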